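(* Let $s_+,s_-\in\mathbb{R}^2$ be distinct, and let $\mathcal{C}_{s_+,s_-}=\{x\mapsto\mathrm{sign}(w^\top x-b): w\in\mathbb{R}^2,\ b\in\mathbb{R},\ w^\top s_+\ge b> w^\top s_-\}$ be the class of two-dimensional $\{(s_+,+1),(s_-,-1)\}$-halfspaces on $\mathcal{X}=\mathbb{R}^2$. Then $(\mathcal{C}_{s_+,s_-},\mathbb{R}^2)$ has certificate dimension $3$ with parameters $m=7$ and $n=3$.
   Context: $\mathrm{sign}(z)=+1$ if $z\ge0$ and $-1$ if $z<0$. Notation: $\mathcal{L}=\mathcal{X}\times\{\pm1\}$; $\mathcal{P}_n(\mathcal{L})$ = $n$-element subsets of $\mathcal{L}$. For finite $S\subseteq\mathcal{L}$, $\mathcal{V}(S)=\{h\in\mathcal{C}: h(x)=y\ \forall (x,y)\in S\}$ (with $\mathcal{C}$ the class under consideration). A set of labeled examples is ''labeled by $h$'' if $y=h(x)$ for each of its elements. Certificate dimension: $(\mathcal{C},\mathcal{X})$ has certificate dimension $k$ with parameters $(m,n)$ (integers $m,n\ge1$) if there is a function $\sigma:\mathcal{C}\times\mathcal{P}_{k-1}(\mathcal{L})\to\{0,1,\dots,n-1\}$ such that for every $h\in\mathcal{C}$ and every $S\subseteq\mathcal{L}$ with $|S|=m$ labeled by $h$, there exist $U\subseteq S$ with $|U|=k$ and $(x,y)\in U$ such that for every $h'\in\mathcal{V}(S\setminus\{(x,y)\})$: $\sigma(h',U\setminus\{(x,y)\})=\sigma(h,U\setminus\{(x,y)\})\Rightarrow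 h'(x)=h(x)=y$. *)

(* Defs.v *)
From Stdlib Require Import Reals List.
Import ListNotations.
Open Scope R_scope.

Definition pt : Type := (R * R)%type.

(* Labels {+1,-1} are encoded as bool: true = +1, false = -1. *)
Definition sgn (z : R) : bool := if Rle_dec 0 z then true else false.

Definition dot (w x : pt) : R := fst w * fst x + snd w * snd x.

Definition halfspace_class (sp sm : pt) (h : pt -> bool) : Prop :=
  exists (w : pt) (b : R),
    dot w sp >= b /\ b > dot w sm /\ h = (fun x => sgn (dot w x - b)).

Definition card_is {T : Type} (A : T -> Prop) (n : nat) : Prop :=
  exists l : list T, NoDup l /\ length l = n /\ forall z, A z <-> In z l.

(* Labeled examples L = X * bool; sets of labeled examples are predicates.
   sigma is given as a total function; its values are in {0,...,n-1}. *)
Definition cert_dim {X : Type} (C : (X -> bool) -> Prop) (k m n : nat) : Prop :=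
  exists sigma : (X -> bool) -> (X * bool -> Prop) -> nat,
    (forall h A, (sigma h A < n)%nat) /\
    forall h : X -> bool, C h ->
    forall S : X * bool -> Prop,
      card_is S m ->
      (forall x y, S (x, y) -> h x = y) ->
      exists U : X * bool -> Prop,
        (forall z, U z -> S z) /\ card_is U k /\
        exists (x : X) (y : bool), U (x, y) /\
          forall h' : X -> bool, C h' ->
            (forall x' y', S (x', y') -> (x', y') <> (x, y) -> h' x' = y') ->
            sigma h' (fun z => U z /\ z <> (x, y)) =
              sigma h (fun z => U z /\ z <> (x, y)) ->
            h' x = h x /\ h x = y.

(* Main.v *)
Require Import Defs.
From Stdlib Require Import Reals Lra Psatz List Classical ClassicalEpsilon.
Import ListNotations.
Open Scope R_scope.

Definition X1 (sp sm : pt) (p : pt) : R :=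
  (fst p - fst sm) * (fst sp - fst sm) + (snd p - snd sm) * (snd sp - snd sm).
Definition X2 (sp sm : pt) (p : pt) : R :=
  (snd p - snd sm) * (fst sp - fst sm) - (fst p - fst sm) * (snd sp - snd sm).
Definition ff (sp sm : pt) (p : pt) (u : R) : R := X1 sp sm p - u * X2 sp sm p.
Definition rep (sp sm : pt) (h : pt -> bool) (u t : R) : Prop :=
  forall x, h x = sgn (ff sp sm x u - t).

Lemma sgn_true z : sgn z = true <-> 0 <= z.
Proof. unfold sgn; destruct (Rle_dec 0 z); split; intros; try congruence; lra. Qed.
Lemma sgn_false z : sgn z = false <-> z < 0.
Proof. unfold sgn; destruct (Rle_dec 0 z); split; intros; try congruence; lra. Qed.
Lemma sgn_scale k z : 0 < k -> sgn (k * z) = sgn z.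
Proof.
  intros Hk. unfold sgn. destruct (Rle_dec 0 (k*z)), (Rle_dec 0 z); auto.
  - exfalso. apply n. destruct (Rle_dec 0 z); auto. nra.
  - exfalso. apply n. nra.
Qed.

Lemma nf sp sm h : sp <> sm -> halfspace_class sp sm h -> exists u t, rep sp sm h u t.
Proof.
  intros Hne [w [b [H1 [H2 ->]]]].
  destruct sp as [s1 s2], sm as [m1 m2], w as [w1 w2]. unfold dot in *; simpl in *.
  set (n := (s1 - m1)^2 + (s2 - m2)^2).
  assert (Hn : 0 < n).
  { unfold n. destruct (Req_dec s1 m1), (Req_dec s2 m2); subst; try congruence; try nra. }
  set (we := w1 * (s1 - m1) + w2 * (s2 - m2)).
  assert (Hwe : 0 < we) by (unfold we; lra).
  set (wp := - w1 * (s2 - m2) + w2 * (s1 - m1)).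
  exists (- wp / we), (n * (b - (w1 * m1 + w2 * m2)) / we).
  intros [x1 x2]. unfold ff, X1, X2; simpl.
  replace (w1 * x1 + w2 * x2 - b) with
    ((we / n) * (((x1 - m1) * (s1 - m1) + (x2 - m2) * (s2 - m2) -
      - wp / we * ((x2 - m2) * (s1 - m1) - (x1 - m1) * (s2 - m2))) -
      n * (b - (w1 * m1 + w2 * m2)) / we)).
  - apply sgn_scale. apply Rdiv_lt_0_compat; lra.
  - unfold we, wp, n in *. field. split; lra.
Qed.

Definition ray (a b : pt) (l : R) : pt :=
  (fst a + l * (fst b - fst a), snd a + l * (snd b - snd a)).
Definition E (h : pt -> bool) (a b : pt) (y : bool) : Prop :=
  forall l, 1 <= l -> h (ray a b l) = y.

Definition sigma (sp sm : pt) (h : pt -> bool) (P : pt * bool -> Prop) : nat :=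
  if excluded_middle_informative (exists a b y, P (a, y) /\ P (b, y) /\
        X2 sp sm a < X2 sp sm b /\ E h a b y /\ E h b a y) then 1%nat
  else if excluded_middle_informative (exists a b y, P (a, y) /\ P (b, y) /\
        X2 sp sm a < X2 sp sm b /\ E h a b y) then 2%nat else 0%nat.

Definition code (y : bool) (D : R) : nat :=
  if Rle_dec D 0 then (if Rle_dec 0 D then 1%nat else if y then 0%nat else 2%nat)
  else (if y then 2%nat else 0%nat).

Lemma code_eq y D1 D2 : code y D1 = code y D2 ->
  (0 <= D1 -> 0 <= D2) /\ (D1 <= 0 -> D2 <= 0) /\ (D1 < 0 -> D2 < 0) /\ (0 < D1 -> 0 < D2).
Proof.
  unfold code; destruct y; destruct (Rle_dec D1 0), (Rle_dec 0 D1), (Rle_dec D2 0), (Rle_dec 0 D2);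
  intros; try discriminate; repeat split; intros; lra.
Qed.

Lemma ff_ray sp sm a b l u : ff sp sm (ray a b l) u = ff sp sm a u + l * (ff sp sm b u - ff sp sm a u).
Proof. unfold ff, X1, X2, ray; simpl; ring. Qed.

Lemma E_spec sp sm h u t a b y : rep sp sm h u t -> h a = y -> h b = y ->
  (E h a b y <-> (if y then 0 <= ff sp sm b u - ff sp sm a u else ff sp sm b u - ff sp sm a u <= 0)).
Proof.
  intros Hr Ha Hb. unfold E. rewrite Hr in Ha, Hb.
  set (fa := ff sp sm a u) in *. set (fb := ff sp sm b u) in *.
  destruct y; [apply sgn_true in Ha; apply sgn_true in Hb | apply sgn_false in Ha; apply sgn_false in Hb];
  split.
  - intros HE. destruct (Rle_dec 0 (fb - fa)) as [|Hn]; auto. exfalso.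
    set (l := 2 + (fb - t) / (fa - fb)).
    assert (H0 : 0 <= (fb - t) / (fa - fb)) by (unfold Rdiv; apply Rle_mult_inv_pos; lra).
    specialize (HE l ltac:(unfold l; lra)). rewrite Hr, ff_ray in HE. apply sgn_true in HE.
    fold fa fb in HE. unfold l in HE.
    replace (fa + (2 + (fb - t) / (fa - fb)) * (fb - fa) - t) with (fb - fa) in HE by (field; lra). lra.
  - intros HD l Hl. rewrite Hr, ff_ray. apply sgn_true. fold fa fb. nra.
  - intros HE. destruct (Rle_dec (fb - fa) 0) as [|Hn]; auto. exfalso.
    set (l := 2 + (t - fb) / (fb - fa)).
    assert (H0 : 0 <= (t - fb) / (fb - fa)) by (unfold Rdiv; apply Rle_mult_inv_pos; lra).
    specialize (HE l ltac:(unfold l; lra)). rewrite Hr, ff_ray in HE. apply sgn_false in HE.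
    fold fa fb in HE. unfold l in HE.
    replace (fa + (2 + (t - fb) / (fb - fa)) * (fb - fa) - t) with (fb - fa) in HE by (field; lra). lra.
  - intros HD l Hl. rewrite Hr, ff_ray. apply sgn_false. fold fa fb. nra.
Qed.

Lemma sigma_spec sp sm h u t a b y (P : pt * bool -> Prop) :
  rep sp sm h u t -> X2 sp sm a < X2 sp sm b -> h a = y -> h b = y ->
  (forall z, P z <-> z = (a, y) \/ z = (b, y)) ->
  sigma sp sm h P = code y (ff sp sm b u - ff sp sm a u).
Proof.
  intros Hr Hlt Ha Hb HP.
  pose proof (E_spec sp sm h u t a b y Hr Ha Hb) as E1.
  pose proof (E_spec sp sm h u t b a y Hr Hb Ha) as E2.
  assert (Hid : forall a' b' y', P (a', y') -> P (b', y') -> X2 sp sm a' < X2 sp sm b' ->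
            a' = a /\ b' = b /\ y' = y).
  { intros a' b' y' Pa Pb Hl. apply HP in Pa. apply HP in Pb.
    destruct Pa as [Pa|Pa]; destruct Pb as [Pb|Pb]; injection Pa; injection Pb; intros; subst;
    auto; lra. }
  assert (Pa : P (a, y)) by (apply HP; auto).
  assert (Pb : P (b, y)) by (apply HP; auto).
  unfold sigma, code. destruct excluded_middle_informative as [H1|H1].
  - destruct H1 as (a' & b' & y' & Pa' & Pb' & Hl & Ea & Eb).
    destruct (Hid a' b' y' Pa' Pb' Hl) as (-> & -> & ->).
    apply E1 in Ea. apply E2 in Eb.
    destruct y; repeat destruct Rle_dec; auto; lra.
  - destruct excluded_middle_informative as [H2|H2].
    + destruct H2 as (a' & b' & y' & Pa' & Pb' & Hl & Ea).
      destruct (Hid a' b' y' Pa' Pb' Hl) as (-> & -> & ->).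
      assert (~ E h b a y) by (intro; apply H1; exists a, b, y; auto).
      rewrite E2 in H. apply E1 in Ea.
      destruct y; repeat destruct Rle_dec; auto; lra.
    + assert (~ E h a b y) by (intro; apply H2; exists a, b, y; auto).
      rewrite E1 in H.
      destruct y; repeat destruct Rle_dec; auto; lra.
Qed.

Definition Gl (sp sm : pt) (h : pt -> bool) (S : pt * bool -> Prop) : Prop :=
  exists U : pt * bool -> Prop,
    (forall z, U z -> S z) /\ card_is U 3 /\
    exists (x : pt) (y : bool), U (x, y) /\
      forall h' : pt -> bool, halfspace_class sp sm h' ->
        (forall x' y', S (x', y') -> (x', y') <> (x, y) -> h' x' = y') ->
        sigma sp sm h' (fun z => U z /\ z <> (x, y)) =
          sigma sp sm h (fun z => U z /\ z <> (x, y)) ->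
        h' x = h x /\ h x = y.

Lemma Fin sp sm h S (A B Z : pt * bool) :
  S A -> S B -> S Z -> A <> B -> A <> Z -> B <> Z ->
  (forall x y, S (x, y) -> h x = y) ->
  (forall h', halfspace_class sp sm h' -> h' (fst A) = snd A -> h' (fst B) = snd B ->
     sigma sp sm h' (fun z => (z = A \/ z = B \/ z = Z) /\ z <> Z) =
     sigma sp sm h (fun z => (z = A \/ z = B \/ z = Z) /\ z <> Z) ->
     h' (fst Z) = snd Z) ->
  Gl sp sm h S.
Proof.
  intros HA HB HZ nAB nAZ nBZ Hlab Hp.
  exists (fun z => z = A \/ z = B \/ z = Z). split; [|split].
  - intros z [ -> | [ -> | -> ] ]; auto.
  - exists [A; B; Z]. split; [|split].
    + constructor. simpl; intuition. constructor. simpl; intuition.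
      constructor. simpl; auto. constructor.
    + reflexivity.
    + intros z; simpl; intuition.
  - exists (fst Z), (snd Z). rewrite <- surjective_pairing. split; [right; right; auto|].
    intros h' Hc Hcons Hsig.
    assert (HhZ : h (fst Z) = snd Z) by (apply Hlab; rewrite <- surjective_pairing; auto).
    rewrite HhZ. split; auto. apply Hp; auto.
    + apply Hcons; rewrite <- surjective_pairing; auto.
    + apply Hcons; rewrite <- surjective_pairing; auto.
Qed.

Lemma Kpair sp sm h S (pa pz pb : pt) (y : bool) :
  sp <> sm ->
  S (pa, y) -> S (pz, y) -> S (pb, y) -> (pa, y) <> (pz, y) -> (pa, y) <> (pb, y) -> (pb, y) <> (pz, y) ->
  (forall x y, S (x, y) -> h x = y) ->
  X2 sp sm pa = X2 sp sm pz ->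
  (if y then X1 sp sm pa <= X1 sp sm pz else X1 sp sm pz <= X1 sp sm pa) ->
  Gl sp sm h S.
Proof.
  intros Hne HA HZ HB nAZ nAB nBZ Hlab HX HX1.
  apply (Fin sp sm h S (pa, y) (pb, y) (pz, y)); auto.
  intros h' Hc Ha _ _. simpl in *.
  destruct (nf sp sm h' Hne Hc) as [u [t Hr]]. rewrite Hr in Ha |- *.
  unfold ff in *. rewrite HX in Ha.
  destruct y; [apply sgn_true in Ha; apply sgn_true | apply sgn_false in Ha; apply sgn_false]; lra.
Qed.

Lemma Pchar (A B Z : pt * bool) : A <> Z -> B <> Z ->
  forall z, ((z = A \/ z = B \/ z = Z) /\ z <> Z) <-> z = A \/ z = B.
Proof. intros; split; [intros [[?|[?|?]] ?]; subst; tauto | intros [?|?]; subst; auto]. Qed.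

Lemma neqX sp sm (p q : pt) (y y' : bool) : X2 sp sm p < X2 sp sm q -> (p, y) <> (q, y').
Proof. intros H E. injection E; intros; subst; lra. Qed.

Lemma K sp sm h S (Hne : sp <> sm) u0 t0 (Hr0 : rep sp sm h u0 t0)
  (Hlab : forall x y, S (x, y) -> h x = y) y p1 p2 p3 p4 :
  S (p1, y) -> S (p2, y) -> S (p3, y) -> S (p4, y) ->
  X2 sp sm p1 < X2 sp sm p2 -> X2 sp sm p2 < X2 sp sm p3 -> X2 sp sm p3 < X2 sp sm p4 ->
  Gl sp sm h S.
Proof.
  intros S1 S2 S3 S4 L12 L23 L34.
  assert (h1 : h p1 = y) by auto. assert (h2 : h p2 = y) by auto.
  assert (h3 : h p3 = y) by auto. assert (h4 : h p4 = y) by auto.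
  
  assert (Hf : forall p u, ff sp sm p u = X1 sp sm p - u * X2 sp sm p) by reflexivity.
  assert (Hsig : forall Z h' u t, Z <> (p2, y) -> Z <> (p3, y) -> rep sp sm h' u t ->
     h' p2 = y -> h' p3 = y ->
     sigma sp sm h' (fun z => (z = (p2, y) \/ z = (p3, y) \/ z = Z) /\ z <> Z) =
     sigma sp sm h (fun z => (z = (p2, y) \/ z = (p3, y) \/ z = Z) /\ z <> Z) ->
     code y (ff sp sm p3 u - ff sp sm p2 u) = code y (ff sp sm p3 u0 - ff sp sm p2 u0)).
  { intros Z h' u t n2 n3 Hr Ha Hb Hs.
    rewrite (sigma_spec sp sm h' u t p2 p3 y) in Hs; auto.
    rewrite (sigma_spec sp sm h u0 t0 p2 p3 y) in Hs; auto.
    - apply Pchar; auto.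
    - apply Pchar; auto. }
  destruct y.
  - rewrite Hr0 in h1, h2, h3, h4.
    apply sgn_true in h1; apply sgn_true in h2; apply sgn_true in h3; apply sgn_true in h4.
    destruct (classic (exists u t, t <= ff sp sm p1 u /\ t <= ff sp sm p3 u /\ ff sp sm p2 u < t)) as [W2|NW2].
    2:{ apply (Fin sp sm h S (p1, true) (p3, true) (p2, true)); auto;
        try (apply (neqX sp sm); lra); try (apply not_eq_sym, (neqX sp sm); lra).
        intros h' Hc Ha Hb _; simpl in *.
        destruct (nf sp sm h' Hne Hc) as [u [t Hr]]. rewrite Hr in Ha, Hb |- *.
        apply sgn_true in Ha; apply sgn_true in Hb; apply sgn_true.
        destruct (Rle_dec t (ff sp sm p2 u)) as [|Hn]; [lra|].
        exfalso; apply NW2; exists u, t; repeat split; lra. }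
    destruct (classic (exists u t, t <= ff sp sm p2 u /\ t <= ff sp sm p4 u /\ ff sp sm p3 u < t)) as [W3|NW3].
    2:{ apply (Fin sp sm h S (p2, true) (p4, true) (p3, true)); auto;
        try (apply (neqX sp sm); lra); try (apply not_eq_sym, (neqX sp sm); lra).
        intros h' Hc Ha Hb _; simpl in *.
        destruct (nf sp sm h' Hne Hc) as [u [t Hr]]. rewrite Hr in Ha, Hb |- *.
        apply sgn_true in Ha; apply sgn_true in Hb; apply sgn_true.
        destruct (Rle_dec t (ff sp sm p3 u)) as [|Hn]; [lra|].
        exfalso; apply NW3; exists u, t; repeat split; lra. }
    destruct W2 as (u2 & t2 & W2a & W2b & W2c).
    destruct W3 as (u3 & t3 & W3a & W3b & W3c).
    destruct (Rle_dec 0 (ff sp sm p3 u0 - ff sp sm p2 u0)) as [D0|D0].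
    + apply (Fin sp sm h S (p2, true) (p3, true) (p4, true)); auto;
        try (apply (neqX sp sm); lra); try (apply not_eq_sym, (neqX sp sm); lra).
      intros h' Hc Ha Hb Hs; simpl in *.
      destruct (nf sp sm h' Hne Hc) as [u [t Hr]].
      apply (Hsig _ h' u t) in Hs; auto; try (apply (neqX sp sm); lra); try (apply not_eq_sym, (neqX sp sm); lra).
      symmetry in Hs; apply code_eq in Hs. destruct Hs as (Hs1 & _ & _ & _).
      specialize (Hs1 D0).
      rewrite Hr in Ha, Hb |- *.
      apply sgn_true in Ha; apply sgn_true in Hb; apply sgn_true.
      rewrite !Hf in *.
      assert (u < u3) by nra. nra.
    + apply (Fin sp sm h S (p2, true) (p3, true) (p1, true)); auto;
        try (apply (neqX sp sm); lra); try (apply not_eq_sym, (neqX sp sm); lra).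
      intros h' Hc Ha Hb Hs; simpl in *.
      destruct (nf sp sm h' Hne Hc) as [u [t Hr]].
      apply (Hsig _ h' u t) in Hs; auto; try (apply (neqX sp sm); lra); try (apply not_eq_sym, (neqX sp sm); lra).
      symmetry in Hs; apply code_eq in Hs. destruct Hs as (_ & _ & Hs1 & _).
      specialize (Hs1 ltac:(lra)).
      rewrite Hr in Ha, Hb |- *.
      apply sgn_true in Ha; apply sgn_true in Hb; apply sgn_true.
      rewrite !Hf in *.
      assert (u2 < u) by nra. nra.
  - rewrite Hr0 in h1, h2, h3, h4.
    apply sgn_false in h1; apply sgn_false in h2; apply sgn_false in h3; apply sgn_false in h4.
    destruct (classic (exists u t, ff sp sm p1 u < t /\ ff sp sm p3 u < t /\ t <= ff sp sm p2 u)) as [W2|NW2].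
    2:{ apply (Fin sp sm h S (p1, false) (p3, false) (p2, false)); auto;
        try (apply (neqX sp sm); lra); try (apply not_eq_sym, (neqX sp sm); lra).
        intros h' Hc Ha Hb _; simpl in *.
        destruct (nf sp sm h' Hne Hc) as [u [t Hr]]. rewrite Hr in Ha, Hb |- *.
        apply sgn_false in Ha; apply sgn_false in Hb; apply sgn_false.
        destruct (Rlt_dec (ff sp sm p2 u) t) as [|Hn]; [lra|].
        exfalso; apply NW2; exists u, t; repeat split; lra. }
    destruct (classic (exists u t, ff sp sm p2 u < t /\ ff sp sm p4 u < t /\ t <= ff sp sm p3 u)) as [W3|NW3].
    2:{ apply (Fin sp sm h S (p2, false) (p4, false) (p3, false)); auto;
        try (apply (neqX sp sm); lra); try (apply not_eq_sym, (neqX sp sm); lra).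
        intros h' Hc Ha Hb _; simpl in *.
        destruct (nf sp sm h' Hne Hc) as [u [t Hr]]. rewrite Hr in Ha, Hb |- *.
        apply sgn_false in Ha; apply sgn_false in Hb; apply sgn_false.
        destruct (Rlt_dec (ff sp sm p3 u) t) as [|Hn]; [lra|].
        exfalso; apply NW3; exists u, t; repeat split; lra. }
    destruct W2 as (u2 & t2 & W2a & W2b & W2c).
    destruct W3 as (u3 & t3 & W3a & W3b & W3c).
    destruct (Rle_dec (ff sp sm p3 u0 - ff sp sm p2 u0) 0) as [D0|D0].
    + apply (Fin sp sm h S (p2, false) (p3, false) (p4, false)); auto;
        try (apply (neqX sp sm); lra); try (apply not_eq_sym, (neqX sp sm); lra).
      intros h' Hc Ha Hb Hs; simpl in *.
      destruct (nf sp sm h' Hne Hc) as [u [t Hr]].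
      apply (Hsig _ h' u t) in Hs; auto; try (apply (neqX sp sm); lra); try (apply not_eq_sym, (neqX sp sm); lra).
      symmetry in Hs; apply code_eq in Hs. destruct Hs as (_ & Hs1 & _ & _).
      specialize (Hs1 D0).
      rewrite Hr in Ha, Hb |- *.
      apply sgn_false in Ha; apply sgn_false in Hb; apply sgn_false.
      rewrite !Hf in *.
      assert (u3 < u) by nra. nra.
    + apply (Fin sp sm h S (p2, false) (p3, false) (p1, false)); auto;
        try (apply (neqX sp sm); lra); try (apply not_eq_sym, (neqX sp sm); lra).
      intros h' Hc Ha Hb Hs; simpl in *.
      destruct (nf sp sm h' Hne Hc) as [u [t Hr]].
      apply (Hsig _ h' u t) in Hs; auto; try (apply (neqX sp sm); lra); try (apply not_eq_sym, (neqX sp sm); lra).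
      symmetry in Hs; apply code_eq in Hs. destruct Hs as (_ & _ & _ & Hs1).
      specialize (Hs1 ltac:(lra)).
      rewrite Hr in Ha, Hb |- *.
      apply sgn_false in Ha; apply sgn_false in Hb; apply sgn_false.
      rewrite !Hf in *.
      assert (u < u2) by nra. nra.
Qed.

Lemma Kpair2 sp sm h S (pi pj pk : pt) (y : bool) :
  sp <> sm ->
  S (pi, y) -> S (pj, y) -> S (pk, y) -> (pi, y) <> (pj, y) -> (pi, y) <> (pk, y) -> (pj, y) <> (pk, y) ->
  (forall x y, S (x, y) -> h x = y) ->
  X2 sp sm pi = X2 sp sm pj -> Gl sp sm h S.
Proof.
  intros Hne Si Sj Sk nij nik njk Hlab HX.
  destruct (Rle_dec (X1 sp sm pi) (X1 sp sm pj)); destruct y.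
  - apply (Kpair sp sm h S pi pj pk true); auto.
  - apply (Kpair sp sm h S pj pi pk false); auto.
  - apply (Kpair sp sm h S pj pi pk true); auto. simpl; lra.
  - apply (Kpair sp sm h S pi pj pk false); auto. simpl; lra.
Qed.

Lemma filter_len {T} (g : T -> bool) (l : list T) :
  (length (filter g l) + length (filter (fun x => negb (g x)) l))%nat = length l.
Proof. induction l; simpl; auto. destruct (g a); simpl; lia. Qed.

Lemma four_aux (l : list (pt * bool)) (g : pt * bool -> bool) (y : bool) :
  (forall z, g z = true -> snd z = y) -> NoDup l -> (4 <= length (filter g l))%nat ->
  exists p1 p2 p3 p4, In (p1, y) l /\ In (p2, y) l /\ In (p3, y) l /\ In (p4, y) l /\
    (p1, y) <> (p2, y) /\ (p1, y) <> (p3, y) /\ (p1, y) <> (p4, y) /\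
    (p2, y) <> (p3, y) /\ (p2, y) <> (p4, y) /\ (p3, y) <> (p4, y).
Proof.
  intros Hg Hnd Hlen.
  assert (Hnd' : NoDup (filter g l)) by (apply NoDup_filter; auto).
  assert (Hin : forall z, In z (filter g l) -> In (fst z, y) l).
  { intros z Hz. apply filter_In in Hz. destruct Hz as [Hz Hgz].
    apply Hg in Hgz. destruct z; simpl in *; subst; auto. }
  assert (Hy : forall z, In z (filter g l) -> z = (fst z, y)).
  { intros z Hz. apply filter_In in Hz. destruct Hz as [_ Hgz].
    apply Hg in Hgz. destruct z; simpl in *; subst; auto. }
  destruct (filter g l) as [|z1 [|z2 [|z3 [|z4 m]]]]; simpl in Hlen; try lia.
  destruct z1 as [q1 y1], z2 as [q2 y2], z3 as [q3 y3], z4 as [q4 y4].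
  assert (y1 = y) by (pose proof (Hy (q1, y1)); simpl in *; injection H; auto 10).
  assert (y2 = y) by (pose proof (Hy (q2, y2)); simpl in *; injection H0; auto 10).
  assert (y3 = y) by (pose proof (Hy (q3, y3)); simpl in *; injection H1; auto 10).
  assert (y4 = y) by (pose proof (Hy (q4, y4)); simpl in *; injection H2; auto 10).
  subst. exists q1, q2, q3, q4.
  pose proof (Hin (q1, y)); pose proof (Hin (q2, y)); pose proof (Hin (q3, y)); pose proof (Hin (q4, y)).
  simpl in *.
  inversion Hnd' as [|? ? N1 Hnd2]. inversion Hnd2 as [|? ? N2 Hnd3].
  inversion Hnd3 as [|? ? N3 Hnd4]. simpl in *.
  repeat split; try (intro E; rewrite E in *; tauto); tauto.
Qed.

Lemma four_same (l : list (pt * bool)) : NoDup l -> length l = 7%nat ->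
  exists y p1 p2 p3 p4, In (p1, y) l /\ In (p2, y) l /\ In (p3, y) l /\ In (p4, y) l /\
    (p1, y) <> (p2, y) /\ (p1, y) <> (p3, y) /\ (p1, y) <> (p4, y) /\
    (p2, y) <> (p3, y) /\ (p2, y) <> (p4, y) /\ (p3, y) <> (p4, y).
Proof.
  intros Hnd Hl. pose proof (filter_len (fun z : pt * bool => snd z) l) as F.
  destruct (Nat.le_gt_cases 4 (length (filter (fun z : pt * bool => snd z) l))).
  - exists true. apply (four_aux l (fun z => snd z)); auto.
  - exists false. apply (four_aux l (fun z => negb (snd z))); auto.
    + intros z Hz. destruct (snd z); simpl in *; congruence.
    + lia.
Qed.

Lemma sort4 {T} (k : T -> R) (G : Prop) a b c d :
  (k a < k b \/ k b < k a) -> (k a < k c \/ k c < k a) -> (k a < k d \/ k d < k a) ->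
  (k b < k c \/ k c < k b) -> (k b < k d \/ k d < k b) -> (k c < k d \/ k d < k c) ->
  (forall p q r s, In p [a; b; c; d] -> In q [a; b; c; d] -> In r [a; b; c; d] -> In s [a; b; c; d] ->
     k p < k q -> k q < k r -> k r < k s -> G) -> G.
Proof.
  intros D1 D2 D3 D4 D5 D6 H.
  Ltac t4 H p q r s := solve [apply (H p q r s); simpl; (tauto || lra)].
  destruct D1, D2, D3, D4, D5, D6;
  first [ exfalso; lra
  | t4 H a b c d | t4 H a b d c | t4 H a c b d | t4 H a c d b | t4 H a d b c | t4 H a d c b
  | t4 H b a c d | t4 H b a d c | t4 H b c a d | t4 H b c d a | t4 H b d a c | t4 H b d c a
  | t4 H c a b d | t4 H c a d b | t4 H c b a d | t4 H c b d a | t4 H c d a b | t4 H c d b a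
  | t4 H d a b c | t4 H d a c b | t4 H d b a c | t4 H d b c a | t4 H d c a b | t4 H d c b a ].
Qed.

Theorem lemmaD1 (sp sm : pt) :
  sp <> sm -> cert_dim (halfspace_class sp sm) 3 7 3.
Proof.
  intros Hne. exists (sigma sp sm). split.
  { intros h A. unfold sigma. repeat destruct excluded_middle_informative; lia. }
  intros h Hh S [l [Hnd [Hlen Hmem]]] Hlab.
  change (Gl sp sm h S).
  assert (HS : forall z, In z l -> S z) by (intros; apply Hmem; auto).
  destruct (nf sp sm h Hne Hh) as [u0 [t0 Hr0]].
  destruct (four_same l Hnd Hlen) as (y & p1 & p2 & p3 & p4 & I1 & I2 & I3 & I4 &
    n12 & n13 & n14 & n23 & n24 & n34).
  apply HS in I1, I2, I3, I4.
  destruct (Req_dec (X2 sp sm p1) (X2 sp sm p2)) as [E|E].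
  { apply (Kpair2 sp sm h S p1 p2 p3 y); auto. }
  apply Rdichotomy in E.
  destruct (Req_dec (X2 sp sm p1) (X2 sp sm p3)) as [E2|E2].
  { apply (Kpair2 sp sm h S p1 p3 p2 y); auto. }
  apply Rdichotomy in E2.
  destruct (Req_dec (X2 sp sm p1) (X2 sp sm p4)) as [E3|E3].
  { apply (Kpair2 sp sm h S p1 p4 p2 y); auto. }
  apply Rdichotomy in E3.
  destruct (Req_dec (X2 sp sm p2) (X2 sp sm p3)) as [E4|E4].
  { apply (Kpair2 sp sm h S p2 p3 p1 y); auto. }
  apply Rdichotomy in E4.
  destruct (Req_dec (X2 sp sm p2) (X2 sp sm p4)) as [E5|E5].
  { apply (Kpair2 sp sm h S p2 p4 p1 y); auto. }
  apply Rdichotomy in E5.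
  destruct (Req_dec (X2 sp sm p3) (X2 sp sm p4)) as [E6|E6].
  { apply (Kpair2 sp sm h S p3 p4 p1 y); auto. }
  apply Rdichotomy in E6.
  apply (sort4 (X2 sp sm) _ p1 p2 p3 p4); auto; try (destruct E as [E|E]; [left|right]; auto).
  intros p q r s Ip Iq Ir Is L1 L2 L3.
  assert (Hin : forall z, In z [p1; p2; p3; p4] -> S (z, y)).
  { intros z [->|[->|[->|[->|[]]]]]; auto. }
  apply (K sp sm h S Hne u0 t0 Hr0 Hlab y p q r s); auto.
Qed.
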